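(* For any finite graph $G=(V,E)$ there exists a sequence of graphs $(G_n)_{n\in\mathbb{N}}$ with $G_0=G$ and $G_n$ a $2$-lift of $G_{n-1}$ for $n\ge 1$ (so $G_n$ is a $2^n$-lift of $G$, with covering map $\pi_n:G_n\to G$) such that for every $v\in V$ and every choice of $v_n\in\pi_n^{-1}(v)$, the rooted graphs $(G_n,v_n)$ converge to $(T(G),v)$ in $\mathcal{G}_\star$.
   Context: A $2$-lift of a loopless graph $G$ is a graph on $V\times\{0,1\}$ in which each edge $(u,v)$ of $G$ is replaced either by $((u,0),(v,0)),((u,1),(v,1))$ or by $((u,0),(v,1)),((u,1),(v,0))$; the covering map projects $(u,i)\mapsto u$. $(T(G),v)$ is the tree of finite non-backtracking walks in $G$ starting at $v$ (walks adjacent if one extends the other by one step), rooted at the empty walk. $\mathcal{G}_\star$ is the set of locally finite connected rooted graphs up to rooted isomorphism (a rooted graph $(H,o)$ being identified with the connected component of $o$), with the distance $1/(1+r)$ where $r=\sup\{h: [H,o]_h\equiv[H',o']_h\}$ and $[H,o]_h$ is the rooted subgraph induced by vertices within graph distance $h$ of $o$. *)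

(* Defs.v *)
From mathcomp Require Import all_boot.
Set Implicit Arguments. Unset Strict Implicit. Unset Printing Implicit Defensive.

Inductive walkn (A : Type) (adj : A -> A -> bool) : A -> A -> nat -> Prop :=
| walkn0 x : walkn adj x x 0
| walknS x y z k : walkn adj x y k -> adj y z -> walkn adj x z k.+1.

Definition inball (A : Type) (adj : A -> A -> bool) (o : A) (h : nat) (y : A) : Prop :=
  exists k, k <= h /\ walkn adj o y k.

Definition ball_iso (A B : Type) (adjA : A -> A -> bool) (a : A)
    (adjB : B -> B -> bool) (b : B) (h : nat) : Prop :=
  exists (f : A -> B) (g : B -> A),
    f a = b /\
    (forall x, inball adjA a h x -> inball adjB b h (f x) /\ g (f x) = x) /\
    (forall y, inball adjB b h y -> inball adjA a h (g y) /\ f (g y) = y) /\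
    (forall x y, inball adjA a h x -> inball adjA a h y ->
       (adjA x y <-> adjB (f x) (f y))).

(* convergence (H_n, o_n) --> (H, o) in G_star: distance 1/(1+r_n) -> 0,
   i.e. for every radius h the h-balls are eventually rooted isomorphic *)
Definition local_conv (A : nat -> Type) (adjA : forall n, A n -> A n -> bool)
    (o : forall n, A n) (B : Type) (adjB : B -> B -> bool) (b : B) : Prop :=
  forall h, exists N, forall n, N <= n -> ball_iso (adjA n) (o n) adjB b h.

Definition simple_graph (V : finType) (e : rel V) : Prop :=
  symmetric e /\ irreflexive e.

(* vertex set of a 2^n-lift : V x {0,1} x ... x {0,1} *)
Fixpoint LV (V : Type) (n : nat) : Type :=
  match n with 0 => V | n'.+1 => (LV V n' * bool)%type end.

Fixpoint proj (V : Type) (n : nat) : LV V n -> V :=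
  match n return LV V n -> V with
  | 0 => fun x => x
  | n'.+1 => fun x => proj x.1
  end.

(* H' is a 2-lift of H: each edge uv receives a choice s u v (symmetric),
   false = parallel ((u,i),(v,i)), true = crossed ((u,i),(v,1-i)); no other edges *)
Definition is_2lift (T : Type) (H : T -> T -> bool) (H' : (T * bool) -> (T * bool) -> bool)
  : Prop :=
  exists s : T -> T -> bool, (forall u v, s u v = s v u) /\
    forall u v i j, H' (u, i) (v, j) = H u v && ((i != j) == s u v).

(* a walk v, x1, ..., xk is encoded by the list [:: x1; ...; xk] *)
Fixpoint nonbacktrack (V : eqType) (s : seq V) : bool :=
  match s with
  | a :: ((_ :: c :: _) as t) => (a != c) && nonbacktrack t
  | _ => true
  end.

Definition nbwalk (V : finType) (e : rel V) (v : V) (w : seq V) : bool :=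
  path e v w && nonbacktrack (v :: w).

Definition tree_adj (V : finType) (e : rel V) (v : V) (w1 w2 : seq V) : bool :=
  nbwalk e v w1 && nbwalk e v w2 &&
  ((size w2 == (size w1).+1) && (w1 == take (size w1) w2)
   || (size w1 == (size w2).+1) && (w2 == take (size w2) w1)).

(* Main.v *)
Require Import Defs.
From mathcomp Require Import all_boot.
From Stdlib Require Import Classical ClassicalEpsilon Lia.
From mathcomp Require Import zify.
Set Implicit Arguments. Unset Strict Implicit. Unset Printing Implicit Defensive.

Definition cw (X : Type) (H : X -> X -> bool) (m : nat) (f : nat -> X) : Prop :=
  f 0 = f m /\ (forall i, i < m -> H (f i) (f i.+1)) /\
  (forall i, i.+2 <= m -> f i <> f i.+2).

Definition cfree (X : Type) (H : X -> X -> bool) (L : nat) : Prop :=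
  forall m f, 0 < m -> m <= L -> ~ cw H m f.

Lemma nbP (T : eqType) (x0 : T) (s : seq T) :
  nonbacktrack s <-> (forall i, i.+2 < size s -> nth x0 s i <> nth x0 s i.+2).
Proof.
elim: s => [|a t IH]; first by split.
case: t IH => [|b [|c r]] IH; try by split => // _ [|[|i]].
rewrite [nonbacktrack _]/=; split.
- move/andP=> [ac nb] [|i] /=.
    by move=> _ /eqP; rewrite (negbTE ac).
  by rewrite ltnS => Hi; apply: (proj1 IH nb i Hi).
- move=> Hn; apply/andP; split.
    by apply/eqP => Hac; apply: (Hn 0).
  apply/IH => i Hi; exact: (Hn i.+1).
Qed.

Lemma nthr_lt (T : Type) (x0 : T) s z i : i < size s -> nth x0 (rcons s z) i = nth x0 s i.
Proof. by move=> Hi; rewrite nth_rcons Hi. Qed.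
Lemma nthr_eq (T : Type) (x0 : T) s z : nth x0 (rcons s z) (size s) = z.
Proof. by rewrite nth_rcons ltnn eqxx. Qed.
Lemma nb_rcons2 (T : eqType) (x0 : T) (s : seq T) y z :
  nonbacktrack (rcons (rcons s y) z) <->
  nonbacktrack (rcons s y) /\ (0 < size s -> last x0 s <> z).
Proof.
rewrite !(nbP x0) !size_rcons; split.
- move=> N; split.
    move=> i Hi; have := N i; rewrite !(@nthr_lt _ _ (rcons s y)) ?size_rcons; try lia.
    by apply; lia.
  move=> Hs; have := N (size s).-1.
  have E : (size s).-1.+2 = size (rcons s y) by rewrite size_rcons; lia.
  rewrite E nthr_eq nthr_lt ?size_rcons; last lia.
  rewrite nthr_lt; last lia.
  rewrite (nth_last x0) => Hn; apply: Hn; lia.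
- move=> [N L] i Hi.
  have [Hi2|Hi2] := ltnP i.+2 (size s).+1.
    rewrite !(@nthr_lt _ _ (rcons s y)) ?size_rcons; try lia.
    by apply: N.
  have Ei : i = (size s).-1 by lia.
  have E : i.+2 = size (rcons s y) by rewrite size_rcons; lia.
  rewrite E nthr_eq nthr_lt ?size_rcons; last lia.
  rewrite nthr_lt; last lia.
  rewrite Ei (nth_last x0); apply: L; lia.
Qed.

Section Ball.
Variables (V : finType) (e : rel V).

Lemma nbwalkP v w : nbwalk e v w <->
  (forall i, i < size w -> e (nth v (v::w) i) (nth v (v::w) i.+1)) /\
  (forall i, i.+2 <= size w -> nth v (v::w) i <> nth v (v::w) i.+2).
Proof.
rewrite /nbwalk; split.
- move/andP=> [/(pathP v) P /(nbP v) N]; split => // i Hi; exact: N.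
- move=> [P N]; apply/andP; split; first by apply/(pathP v).
  apply/(nbP v) => i; exact: N.
Qed.

Lemma nbwalk_take v w k : nbwalk e v w -> nbwalk e v (take k w).
Proof.
move=> /nbwalkP [P N]; apply/nbwalkP.
have E i : i <= size (take k w) -> nth v (v :: take k w) i = nth v (v :: w) i.
  move=> Hi; rewrite -/(take k.+1 (v :: w)) nth_take //.
  by move: Hi; rewrite size_take; case: ltnP => HH; lia.
have Sz : size (take k w) <= size w by rewrite size_take; case: ltnP => //; lia.
split => i Hi.
- rewrite !E; try lia. apply: P; lia.
- rewrite !E; try lia. apply: N; lia.
Qed.

Lemma nbwalk_belast v w a : nbwalk e v (rcons w a) -> nbwalk e v w.
Proof.
by move=> /(nbwalk_take (size w)); rewrite -cats1 take_size_cat.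
Qed.

Lemma tree_walk v w : nbwalk e v w -> walkn (tree_adj e v) [::] w (size w).
Proof.
elim/last_ind: w => [|w a IH] Hw; first by constructor.
have Hw' := nbwalk_belast Hw.
rewrite size_rcons; apply: walknS (IH Hw') _.
rewrite /tree_adj Hw Hw' size_rcons eqxx /= -cats1 take_size_cat //.
by rewrite eqxx.
Qed.

Lemma tree_ball v h y : inball (tree_adj e v) [::] h y -> nbwalk e v y /\ size y <= h.
Proof.
move=> [k [Hk W]].
suff: forall x y k, walkn (tree_adj e v) x y k -> x = [::] -> nbwalk e v y /\ size y <= k.
  by move=> /(_ _ _ _ W erefl) [? ?]; split => //; lia.
move=> x y' k' {}W; elim: W => [x0|x0 y0 z k0 W IH Hyz] Ex; first by rewrite Ex.
move: Hyz; rewrite /tree_adj => /andP [/andP [_ Hz]].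
have [_ Hs] := IH Ex.
case/orP => /andP [/eqP Ez _]; split => //; lia.
Qed.

Variables (X : Type) (H : X -> X -> bool) (p : X -> V) (lst : X -> V -> X).
Hypothesis C1 : forall x y, H x y -> e (p x) (p y).
Hypothesis C2 : forall x u, e (p x) u -> H x (lst x u) /\ p (lst x u) = u.
Hypothesis C3 : forall x y z, H x y -> H x z -> p y = p z -> y = z.
Hypothesis C4 : forall x y, H x y = H y x.
Variable o : X.
Let v := p o.
Let gw (w : seq V) := foldl lst o w.

Lemma gw_rcons w a : gw (rcons w a) = lst (gw w) a.
Proof. by rewrite /gw foldl_rcons. Qed.

Lemma gw_proj w : path e v w -> p (gw w) = last v w.
Proof.
elim/last_ind: w => [|w a IH] //.
rewrite rcons_path => /andP [Pw E].
by rewrite gw_rcons last_rcons; apply: (C2 _).2; rewrite IH.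
Qed.

Lemma gw_adj w a : path e v (rcons w a) -> H (gw w) (gw (rcons w a)).
Proof.
rewrite rcons_path => /andP [Pw E].
by rewrite gw_rcons; apply: (C2 _).1; rewrite gw_proj.
Qed.

Lemma gw_walk w : path e v w -> walkn H o (gw w) (size w).
Proof.
elim/last_ind: w => [|w a IH] Pw; first by constructor.
rewrite size_rcons; apply: walknS (IH _) (gw_adj Pw).
by move: Pw; rewrite rcons_path => /andP [].
Qed.

Lemma gw_take_proj w i : path e v w -> i <= size w -> p (gw (take i w)) = nth v (v :: w) i.
Proof.
move=> Pw Hi; rewrite gw_proj.
  rewrite (last_nth v) size_take.
  case: ltnP => Hl; first by rewrite -/(take i.+1 (v :: w)) nth_take.
  have Ei : i = size w by lia.
  by rewrite Ei take_size.
by rewrite -(cat_take_drop i w) cat_path in Pw; case/andP: Pw.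
Qed.

Lemma gw_take_adj w i : path e v w -> i < size w -> H (gw (take i w)) (gw (take i.+1 w)).
Proof.
move=> Pw Hi.
have Pt : path e v (take i.+1 w).
  by rewrite -(cat_take_drop i.+1 w) cat_path in Pw; case/andP: Pw.
rewrite (take_nth v Hi) in Pt *; exact: gw_adj.
Qed.


Lemma closed_from b : cfree H (size b) -> nbwalk e v b -> 0 < size b -> gw b = o -> False.
Proof.
move=> CF Nb Hs Eb; have Pb : path e v b by case/andP: Nb.
have [P N] := proj1 (nbwalkP _ _) Nb.
apply: (CF (size b) (fun i => gw (take i b))) => //; split; last split.
- by rewrite take_size Eb take0.
- move=> i Hi; exact: gw_take_adj.
- move=> i Hi E; apply: (N i Hi).
  by rewrite -!gw_take_proj //; [rewrite E | lia].
Qed.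

Lemma junction a1 b1 x : nbwalk e v (rcons a1 x) -> nbwalk e v (rcons b1 x) ->
  gw (rcons a1 x) = gw (rcons b1 x) -> gw a1 <> gw b1 ->
  cfree H (size (rcons a1 x) + size (rcons b1 x)) -> False.
Proof.
set a := rcons a1 x; set b := rcons b1 x => Na Nb Eab Ne CF.
have Pa : path e v a by case/andP: Na.
have Pb : path e v b by case/andP: Nb.
have [_ NA] := proj1 (nbwalkP _ _) Na.
have [_ NB] := proj1 (nbwalkP _ _) Nb.
have Sa : size a = (size a1).+1 by rewrite size_rcons.
have Sb : size b = (size b1).+1 by rewrite size_rcons.
set m := size a + size b.
pose f i := if i < size a then gw (take i a) else gw (take (m - i) b).
have F1 i : i <= size a -> f i = gw (take i a).
  rewrite /f; case: ltnP => // H1 H2.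
  have Ei : i = size a by lia.
  have Em : m - i = size b by rewrite /m; lia.
  by rewrite Em Ei !take_size Eab.
have F2 i : size a <= i -> f i = gw (take (m - i) b).
  by rewrite /f; case: ltnP => // H1 H2; lia.
have Ta : take (size a1) a = a1 by rewrite /a -cats1 take_size_cat.
have Tb : take (size b1) b = b1 by rewrite /b -cats1 take_size_cat.
apply: (CF m f) => //; first by rewrite /m; lia.
split; last split.
- rewrite F1 // F2; last by rewrite /m; lia.
  by rewrite subnn !take0.
- move=> i Hi; have [H1|H1] := ltnP i (size a).
    rewrite !F1 //; last lia. exact: gw_take_adj.
  rewrite !F2 //; last lia.
  have E : m - i = (m - i.+1).+1 by rewrite /m; lia.
  rewrite E C4; apply: gw_take_adj => //; rewrite /m in Hi *; lia.
- move=> i Hi.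
  have [H1|H1] := leqP i.+2 (size a).
    rewrite !F1 //; last lia. move=> E; apply: (NA i H1).
    by rewrite -!gw_take_proj //; [rewrite E | lia].
  have [H2|H2] := leqP (size a) i.
    rewrite !F2 //; last lia. move=> E; apply: (NB (m - i.+2)); first by rewrite /m in Hi *; lia.
    have E2 : (m - i.+2).+2 = m - i by rewrite /m in Hi *; lia.
    rewrite -!gw_take_proj //; last lia; last by rewrite /m in Hi *; lia.
    by rewrite E2 E.
  have Ei : i = size a1 by lia.
  rewrite F1; last lia. rewrite F2; last lia.
  have -> : m - i.+2 = size b1 by rewrite /m Ei; lia.
  by rewrite Ei Ta Tb.
Qed.

Lemma gw_step a z : nbwalk e v a -> H (gw a) z ->
  (exists a1 c, a = rcons a1 c /\ gw a1 = z) \/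
  (nbwalk e v (rcons a (p z)) /\ gw (rcons a (p z)) = z).
Proof.
move=> Na Hz; have Pa : path e v a by case/andP: Na.
have Ez : gw (rcons a (p z)) = z.
  rewrite gw_rcons; have [A B] := C2 (C1 Hz).
  exact: C3 A Hz B.
case/lastP: a Na Pa Hz Ez => [|a1 c] Na Pa Hz Ez.
  right; split => //; rewrite /nbwalk /= andbT.
  by rewrite andbT; exact: (C1 Hz).
have [E|NE] := classic (gw a1 = z); first by left; exists a1, c.
right; split => //.
rewrite /nbwalk rcons_path Pa /=.
have Pa1 : path e v a1 by move: Pa; rewrite rcons_path => /andP [].
apply/andP; split.
  rewrite last_rcons; have := C1 Hz; rewrite gw_proj //; by rewrite last_rcons.
have := proj1 (nb_rcons2 v (v :: a1) c (p z)); rewrite /=.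
have N2 : nonbacktrack (v :: rcons a1 c) by case/andP: Na.
move=> _; apply/(proj2 (nb_rcons2 v (v :: a1) c (p z))); split => //.
move=> _ /= El; apply: NE.
have A1 : H (gw (rcons a1 c)) (gw a1) by rewrite C4; apply: gw_adj.
apply: C3 A1 Hz _; rewrite gw_proj //.
Qed.

Lemma gw_inj L : cfree H L -> forall a b, nbwalk e v a -> nbwalk e v b ->
  size a + size b <= L -> gw a = gw b -> a = b.
Proof.
move=> CF a b; move: {2}(size a + size b) (leqnn (size a + size b)) => N.
elim: N a b => [|N IH] a b HN Na Nb HL Eab.
  by case: a b HN {Na Nb HL Eab} => [|? ?] [|? ?].
have CFm k : k <= L -> cfree H k.
  by move=> Hk m f H1 H2; apply: CF => //; lia.
case/lastP: a HN Na HL Eab => [|a1 x]; case/lastP: b Nb => [|b1 y] //.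
- move=> Nb HN Na HL Eab; exfalso; apply: (closed_from (b := rcons b1 y)) => //.
    by apply: CFm; move: HL; rewrite /=.
  by rewrite size_rcons.
- move=> Nb HN Na HL Eab; exfalso; apply: (closed_from (b := rcons a1 x)) => //.
    by apply: CFm; move: HL; rewrite /= addn0.
  by rewrite size_rcons.
move=> Nb HN Na HL Eab.
have Pa : path e v (rcons a1 x) by case/andP: Na.
have Pb : path e v (rcons b1 y) by case/andP: Nb.
have Exy : x = y.
  by have := gw_proj Pa; rewrite Eab gw_proj // !last_rcons.
subst y.
have [E1|NE] := classic (gw a1 = gw b1).
  rewrite (IH a1 b1) //.
  - by move: HN; rewrite !size_rcons; lia.
  - exact: nbwalk_belast Na.
  - exact: nbwalk_belast Nb.
  - by move: HL; rewrite !size_rcons; lia.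
exfalso; apply: (junction Na Nb Eab NE); exact: CFm.
Qed.

Lemma reduce_walk k y : walkn H o y k -> exists w, nbwalk e v w /\ size w <= k /\ gw w = y.
Proof.
suff: forall x y k, walkn H x y k -> x = o -> exists w, nbwalk e v w /\ size w <= k /\ gw w = y.
  by move=> Hs W; exact: (Hs _ _ _ W erefl).
move=> x y' k' W; elim: W => [x0|x0 y0 z k0 W IH Hyz] Ex.
  by exists [::]; rewrite Ex.
have [w [Nw [Sw Ew]]] := IH Ex.
rewrite -Ew in Hyz.
case: (gw_step Nw Hyz) => [[a1 [c [Ea E1]]]|[N2 E2]].
  exists a1; split; first by rewrite Ea in Nw; exact: nbwalk_belast Nw.
  by split => //; rewrite Ea size_rcons in Sw; lia.
by exists (rcons w (p z)); rewrite size_rcons.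
Qed.

End Ball.

Theorem ball_thm (V : finType) (e : rel V) (X : Type) (H : X -> X -> bool)
  (p : X -> V) (lst : X -> V -> X) :
  (forall x y, H x y -> e (p x) (p y)) ->
  (forall x u, e (p x) u -> H x (lst x u) /\ p (lst x u) = u) ->
  (forall x y z, H x y -> H x z -> p y = p z -> y = z) ->
  (forall x y, H x y = H y x) ->
  forall (o : X) h, cfree H (h + h).+2 -> ball_iso H o (tree_adj e (p o)) [::] h.
Proof.
move=> C1 C2 C3 C4 o h CF.
pose gw := foldl lst o.
pose P x w := nbwalk e (p o) w /\ size w <= h /\ gw w = x.
pose f x := epsilon (inhabits [::]) (P x).
have fP x : (exists w, P x w) -> P x (f x) by move=> Ex; exact: epsilon_spec.
clearbody f.
have INJ a b : nbwalk e (p o) a -> nbwalk e (p o) b -> size a + size b <= (h + h).+2 ->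
    gw a = gw b -> a = b.
  move=> Na Nb Hs Eg; exact: (gw_inj C2 C4 CF Na Nb Hs Eg).
have GB x : inball H o h x -> P x (f x).
  move=> [k [Hk W]]; apply: fP.
  have [w [Nw [Sw Ew]]] := reduce_walk C1 C2 C3 C4 W.
  by exists w; split => //; split => //; lia.
exists f, gw; split; last split; last split.
- have := fP o (ex_intro _ [::] (conj (erefl _) (conj (leq0n _) (erefl _)))).
  move=> [N0 [S0 E0]]; apply: INJ => //; rewrite addn0; apply: (leq_trans S0); lia.
- move=> x Bx; have [Nx [Sx Ex]] := GB x Bx; split => //.
  by exists (size (f x)); split => //; exact: tree_walk.
- move=> y By; have [Ny Sy] := tree_ball By.
  have Bg : inball H o h (gw y).
    exists (size y); split => //; apply: (gw_walk C2); by case/andP: Ny.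
  split => //; have [N1 [S1 E1]] := GB _ Bg; apply: INJ => //; lia.
- move=> x y Bx By; have [Nx [Sx Ex]] := GB x Bx; have [Ny [Sy Ey]] := GB y By.
  split.
  + move=> Hxy; rewrite -Ex in Hxy.
    case: (gw_step C1 C2 C3 C4 Nx Hxy) => [[a1 [c [Ea E1]]]|[N2 E2]].
      have Na1 : nbwalk e (p o) a1 by rewrite Ea in Nx; exact: nbwalk_belast Nx.
      have Ea1 : a1 = f y.
        apply: INJ => //; first by rewrite Ea size_rcons in Sx; lia.
        exact: (etrans E1 (esym Ey)).
      rewrite /tree_adj Nx Ny Ea -Ea1 size_rcons eqxx /= -cats1 take_size_cat //.
      by rewrite eqxx orbT.
    have E3 : rcons (f x) (p y) = f y.
      apply: INJ => //; first by rewrite size_rcons; lia.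
      exact: (etrans E2 (esym Ey)).
    by rewrite /tree_adj Nx Ny -E3 size_rcons eqxx /= -cats1 take_size_cat // eqxx.
  + rewrite /tree_adj Nx Ny /= => /orP [] /andP [/eqP Hs /eqP Ht].
      have Pf : path e (p o) (f y) by case/andP: Ny.
      have Ey' : f y = rcons (f x) (nth (p o) (f y) (size (f x))).
        by rewrite {1}Ht -take_nth ?Hs // -Hs take_size.
      rewrite -Ex -Ey Ey'; apply: (gw_adj C2); by move: Pf; rewrite {1}Ey'.
    have Pf : path e (p o) (f x) by case/andP: Nx.
    have Ex' : f x = rcons (f y) (nth (p o) (f x) (size (f y))).
      by rewrite {1}Ht -take_nth ?Hs // -Hs take_size.
    rewrite -Ex -Ey C4 Ex'; apply: (gw_adj C2); by move: Pf; rewrite {1}Ex'.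
Qed.

Definition lift (X : Type) (H : X -> X -> bool) (s : X -> X -> bool) :
  X * bool -> X * bool -> bool :=
  fun x y => H x.1 y.1 && ((x.2 != y.2) == s x.1 y.1).

Lemma cw_ext (X : Type) (H : X -> X -> bool) L f g :
  (forall i, i <= L -> f i = g i) -> cw H L f -> cw H L g.
Proof.
move=> E [C0 [C1 C2]]; split; last split.
- rewrite -E // -E //.
- move=> i Hi; rewrite -E; last lia. rewrite -E; last lia. exact: C1.
- move=> i Hi; rewrite -E; last lia. rewrite -E; last lia. exact: C2.
Qed.

Lemma xor_eq (x y c : bool) : ((x != y) == c) -> y = x (+) c.
Proof. by case: x; case: y; case: c. Qed.

Lemma lift_cw (X : Type) (H : X -> X -> bool) s L f :
  (forall u v, s u v = s v u) ->
  cw (lift H s) L f -> cw H L (fun i => (f i).1).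
Proof.
move=> Ss [C0 [C1 C2]]; split; last split.
- by rewrite C0.
- by move=> i Hi; case/andP: (C1 i Hi).
- move=> i Hi E; apply: (C2 i Hi).
  have /andP [_ A] := C1 i (ltnW Hi).
  have /andP [_ B] := C1 i.+1 Hi.
  move: (xor_eq A) (xor_eq B); rewrite Ss -E => A' B'.
  have E2 : (f i).2 = (f i.+2).2.
    by rewrite B' A' -addbA addbb addbF.
  by case: (f i) (f i.+2) E E2 => [? ?] [? ?] /= -> ->.
Qed.

Lemma lift_cfree (X : Type) (H : X -> X -> bool) s L :
  (forall u v, s u v = s v u) -> cfree H L -> cfree (lift H s) L.
Proof. by move=> Ss CF m f H1 H2 /(lift_cw Ss); apply: CF. Qed.

Definition sgn (X : Type) (s : X -> X -> bool) L (f : nat -> X) : bool :=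
  \big[addb/false]_(0 <= i < L) s (f i) (f i.+1).

Lemma sgn_ext (X : Type) (s : X -> X -> bool) L f g :
  (forall i, i <= L -> f i = g i) -> sgn s L f = sgn s L g.
Proof.
move=> E; apply: eq_big_nat => i /andP [_ Hi]; rewrite !E //; lia.
Qed.

Lemma telescope (b : nat -> bool) L :
  \big[addb/false]_(0 <= i < L) (b i (+) b i.+1) = b 0 (+) b L.
Proof.
elim: L => [|L IH]; first by rewrite big_geq // addbb.
by rewrite big_nat_recr //= IH -addbA (addbA (b L)) addbb.
Qed.

Lemma lift_sgn (X : Type) (H : X -> X -> bool) s L f :
  cw (lift H s) L f -> sgn s L (fun i => (f i).1) = false.
Proof.
move=> [C0 [C1 _]]; rewrite /sgn.
rewrite (@eq_big_nat _ _ _ 0 L _ (fun i => (f i).2 (+) (f i.+1).2)).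
  by rewrite telescope C0 addbb.
move=> i /andP [_ Hi]; have /andP [_ A] := C1 i Hi.
by rewrite (xor_eq A) addbA addbb.
Qed.

Definition fn (T : Type) L (F : {ffun 'I_L.+1 -> T}) : nat -> T := fun k => F (inord k).

Definition cwb (T : finType) (H : rel T) L (F : {ffun 'I_L.+1 -> T}) : bool :=
  [&& fn F 0 == fn F L, all (fun i => H (fn F i) (fn F i.+1)) (iota 0 L) &
      all (fun i => fn F i != fn F i.+2) (iota 0 L.-1)].
Arguments cwb {T} H L F.

Lemma cwbP (T : finType) (H : rel T) L F : cwb H L F <-> cw H L (fn F).
Proof.
rewrite /cwb; split.
- move=> /and3P [/eqP A /allP B /allP C]; split; first exact: A. split.
  + by move=> i Hi; apply: B; rewrite mem_iota.
  + move=> i Hi; apply/eqP; apply: C; rewrite mem_iota; lia.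
- move=> [A [B C]]; apply/and3P; split; first by apply/eqP.
  + by apply/allP => i; rewrite mem_iota => /andP [_ Hi]; apply: B.
  + apply/allP => i; rewrite mem_iota => /andP [_ Hi]; apply/eqP; apply: C; lia.
Qed.

Definition cnt (T : finType) (H : rel T) L := #|[set F : {ffun 'I_L.+1 -> T} | cwb H L F]|.

Lemma fn_ffun (T : finType) L (f : nat -> T) i : i <= L ->
  fn [ffun j : 'I_L.+1 => f j] i = f i.
Proof. by move=> Hi; rewrite /fn ffunE inordK. Qed.

Lemma cnt_pos (T : finType) (H : rel T) L f : cw H L f -> 0 < cnt H L.
Proof.
move=> C; rewrite /cnt card_gt0; apply/set0Pn.
exists [ffun j : 'I_L.+1 => f j]; rewrite inE; apply/cwbP.
by apply: cw_ext C => i Hi; rewrite fn_ffun.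
Qed.

Lemma cnt_cw (T : finType) (H : rel T) L : 0 < cnt H L -> exists f, cw H L f.
Proof.
rewrite /cnt card_gt0 => /set0Pn [F]; rewrite inE => /cwbP C; by exists (fn F).
Qed.

Lemma lift_bound (T : finType) (H : rel T) s L :
  (forall u v, s u v = s v u) ->
  cnt (lift H s) L <= 2 * #|[set F : {ffun 'I_L.+1 -> T} | cwb H L F && ~~ sgn s L (fn F)]|.
Proof.
move=> Ss.
set A := [set F : {ffun 'I_L.+1 -> T * bool} | cwb (lift H s) L F].
set B := [set F : {ffun 'I_L.+1 -> T} | cwb H L F && ~~ sgn s L (fn F)].
pose Phi (F : {ffun 'I_L.+1 -> T * bool}) := ([ffun i => (F i).1], (F ord0).2).
have Efn (F : {ffun 'I_L.+1 -> T * bool}) k : k <= L -> fn [ffun i => (F i).1] k = (fn F k).1.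
  by move=> Hk; rewrite /fn ffunE.
rewrite /cnt -/A -(card_in_imset (f := Phi)).
  apply: leq_trans (subset_leq_card (_ : _ \subset setX B [set: bool])) _.
    apply/subsetP => _ /imsetP [F FA ->]; rewrite !inE andbT.
    move: FA; rewrite inE => /cwbP C.
    have C1 := lift_cw Ss C.
    apply/andP; split.
      apply/cwbP; apply: cw_ext C1 => i Hi; by rewrite Efn.
    rewrite (@sgn_ext _ _ _ _ (fun i => (fn F i).1)); last by move=> i Hi; rewrite Efn.
    by rewrite (lift_sgn C).
  by rewrite cardsX cardsT card_bool mulnC.
move=> F1 F2; rewrite !inE => /cwbP C1 /cwbP C2 [E1 E2].
have Ef i : (F1 i).1 = (F2 i).1.
  by have := congr1 (fun g : {ffun 'I_L.+1 -> T} => g i) E1; rewrite /= !ffunE.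
have Eb k : k <= L -> (fn F1 k).2 = (fn F2 k).2.
  elim: k => [|k IH] Hk.
    by rewrite /fn (_ : inord 0 = ord0) //; apply: val_inj; rewrite /= inordK.
  have [_ [A1 _]] := C1; have [_ [A2 _]] := C2.
  have /andP [_ X1] := A1 k Hk; have /andP [_ X2] := A2 k Hk.
  rewrite (xor_eq X1) (xor_eq X2) IH; last lia.
  by rewrite /fn !Ef.
apply/ffunP => i; have := Eb i (leq_ord i); rewrite /fn inord_val.
by case: (F1 i) (F2 i) (Ef i) => [? ?] [? ?] /= -> ->.
Qed.

Definition cp (T : finType) (u v : T) : T * T :=
  if enum_rank u <= enum_rank v then (u, v) else (v, u).

Lemma cp_sym (T : finType) (u v : T) : cp u v = cp v u.
Proof.
rewrite /cp; case: leqP => H1; case: leqP => H2 //; try lia.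
have E : enum_rank u = enum_rank v by apply: val_inj; apply/eqP; rewrite eqn_leq H1 H2.
by rewrite (enum_rank_inj E).
Qed.

Lemma cp_eq (T : finType) (a b c d : T) : cp a b = cp c d -> (a = c /\ b = d) \/ (a = d /\ b = c).
Proof.
by rewrite /cp; case: ifP; case: ifP => _ _ [-> ->]; auto.
Qed.

Definition st (T : finType) (t : {ffun T * T -> bool}) (u v : T) := t (cp u v).

Lemma cw_distinct (X : Type) (H : X -> X -> bool) L f : cw H L f -> cfree H L.-1 ->
  forall i j, i < j <= L -> (0 < i \/ j < L) -> f i <> f j.
Proof.
move=> [C0 [C1 C2]] CF i j /andP [Hij HjL] Hor E.
apply: (CF (j - i) (fun k => f (i + k))); try lia.
split; last split.
- by rewrite addn0 subnKC ?E //; lia.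
- move=> k Hk; rewrite addnS; apply: C1; lia.
- move=> k Hk; rewrite !addnS; apply: C2; lia.
Qed.

Lemma cp_unique (X : finType) (H : rel X) L f : cw H L f -> cfree H L.-1 ->
  forall i, 0 < i < L -> cp (f i) (f i.+1) <> cp (f 0) (f 1).
Proof.
move=> C CF i /andP [H0 HL] /cp_eq [[A B]|[A B]].
  by apply: (cw_distinct C CF (i := 0) (j := i)); [lia | right; lia | rewrite A].
have [H1|H1] := ltnP i.+1 L.
  by apply: (cw_distinct C CF (i := 0) (j := i.+1)); [lia | right; lia | rewrite B].
have EL : L = i.+1 by lia.
have [H2|H2] := ltnP 1 i.
  by apply: (cw_distinct C CF (i := 1) (j := i)); [lia | left; lia | rewrite A].
have Ei : i = 1 by lia.
have [C0 [_ C2]] := C; apply: (C2 0); first lia.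
by rewrite C0 EL Ei.
Qed.

Lemma halve (T : finType) (H : rel T) L f : 0 < L -> cw H L f -> cfree H L.-1 ->
  2 * #|[set t : {ffun T * T -> bool} | ~~ sgn (st t) L f]| = #|{ffun T * T -> bool}|.
Proof.
move=> L0 C CF.
set c := cp (f 0) (f 1).
pose flip (t : {ffun T * T -> bool}) := [ffun z => if z == c then ~~ t z else t z].
have flipK : involutive flip.
  by move=> t; apply/ffunP => z; rewrite !ffunE; case: eqP => // _; rewrite negbK.
have sgn_flip t : sgn (st (flip t)) L f = ~~ sgn (st t) L f.
  rewrite /sgn big_ltn // [X in _ = ~~ X]big_ltn // /st ffunE -/c eqxx addNb; congr (~~ (_ (+) _)).
  apply: eq_big_nat => i /andP [Hi1 Hi2]; rewrite ffunE ifF //.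
  by apply/eqP; apply: (cp_unique C CF); lia.
set X := [set t | ~~ sgn (st t) L f].
have EY : flip @: X = ~: X.
  apply/setP => t; rewrite !inE; apply/imsetP/idP.
    by move=> [u]; rewrite inE => Hu ->; rewrite sgn_flip negbK.
  move=> Ht; exists (flip t); last by rewrite flipK.
  by rewrite inE sgn_flip.
have := cardsC X; rewrite -EY card_imset; last exact: can_inj flipK.
move=> <-; lia.
Qed.

Lemma sum_bool_card (I : finType) (P : pred I) : \sum_i (P i : nat) = #|[set i | P i]|.
Proof.
rewrite -sum1_card [RHS]big_mkcond /=; apply: eq_bigr => i _; rewrite inE; by case: (P i).
Qed.

Lemma exists_better (T : finType) (H : rel T) L : 0 < L -> cfree H L.-1 -> 0 < cnt H L ->
  exists s : T -> T -> bool, (forall u v, s u v = s v u) /\ cnt (lift H s) L < cnt H L.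
Proof.
move=> L0 CF Cp.
pose B (t : {ffun T * T -> bool}) :=
  [set F : {ffun 'I_L.+1 -> T} | cwb H L F && ~~ sgn (st t) L (fn F)].
suff [t Ht] : exists t, 2 * #|B t| < cnt H L.
  have Ss : forall u v, st t u v = st t v u by move=> u v; rewrite /st cp_sym.
  exists (st t); split => //.
  apply: leq_ltn_trans Ht; exact: lift_bound.
case: (pickP [pred t | 2 * #|B t| < cnt H L]) => [t Ht|Hno]; first by exists t.
exfalso.
have ID : \sum_t (2 * #|B t|) = \sum_(t : {ffun T * T -> bool}) cnt H L.
  transitivity (\sum_t \sum_F (2 * ((cwb H L F && ~~ sgn (st t) L (fn F)) : nat))).
    apply: eq_bigr => t _; rewrite -big_distrr /=; congr (2 * _).
    by rewrite sum_bool_card.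
  rewrite exchange_big /=.
  transitivity (\sum_F \sum_(t : {ffun T * T -> bool}) (cwb H L F : nat)).
    apply: eq_bigr => F _; case: (boolP (cwb H L F)) => HF /=; last first.
      by rewrite !big1.
    rewrite -big_distrr /= sum_bool_card (sum_bool_card (fun _ => true)) cardsT.
    have C := proj1 (@cwbP _ H L F) HF; exact: (halve L0 C CF).
  rewrite exchange_big /=; apply: eq_bigr => t _; by rewrite sum_bool_card.
pose t0 : {ffun T * T -> bool} := [ffun => false].
have t0E : #|B t0| = cnt H L.
  rewrite /cnt; apply: eq_card => F; rewrite /B !inE.
  suff -> : sgn (st t0) L (fn F) = false by rewrite andbT.
  by rewrite /sgn big1 // => i _; rewrite /st ffunE.
have Hge t : cnt H L <= 2 * #|B t|.
  by have := Hno t; rewrite /= => /negbT; rewrite -leqNgt.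
have SPL : \sum_t 2 * #|B t| = \sum_(t : {ffun T * T -> bool}) cnt H L + \sum_t (2 * #|B t| - cnt H L).
  rewrite -big_split /=; apply: eq_bigr => t _; by rewrite subnKC.
have Z : \sum_t (2 * #|B t| - cnt H L) = 0.
  by move: ID; rewrite SPL => /eqP; rewrite -{2}[\sum_(t : {ffun T * T -> bool}) cnt H L]addn0 eqn_add2l => /eqP.
rewrite (bigD1 t0) //= t0E in Z.
move: Z Cp; clearbody B t0; lia.
Qed.

Definition good (T : finType) (H : rel T) (s : T -> T -> bool) : Prop :=
  (forall u v, s u v = s v u) /\
  forall L, 0 < L -> cfree H L.-1 -> 0 < cnt H L -> cnt (lift H s) L < cnt H L.

Lemma good_ex (T : finType) (H : rel T) : exists s, good H s.
Proof.
case: (classic (exists L, 0 < L /\ cfree H L.-1 /\ 0 < cnt H L)) => [[L [L0 [CF Cp]]]|NE].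
  have [s [Ss Hs]] := exists_better L0 CF Cp.
  exists s; split => // L' L0' CF' Cp'.
  have -> : L' = L; last done.
  case: (ltngtP L' L) => // Hlt.
    have [f Cf] := cnt_cw Cp'; exfalso; apply: (CF L' f) => //; lia.
  have [f Cf] := cnt_cw Cp; exfalso; apply: (CF' L f) => //; lia.
exists (fun _ _ => false); split => // L L0 CF Cp; exfalso; apply: NE; exists L; auto.
Qed.

Definition choose_sign (T : finType) (H : rel T) : T -> T -> bool :=
  epsilon (inhabits (fun _ _ : T => false)) (good H).

Lemma choose_good (T : finType) (H : rel T) : good H (choose_sign H).
Proof. exact: (epsilon_spec _ _ (good_ex H)). Qed.

Fixpoint LVf (V : finType) (n : nat) : finType :=
  match n with 0 => V | n'.+1 => (LVf V n' * bool)%type end.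

Fixpoint Gf (V : finType) (e : rel V) (n : nat) : rel (LVf V n) :=
  match n return rel (LVf V n) with
  | 0 => e
  | n'.+1 => lift (@Gf V e n') (choose_sign (@Gf V e n'))
  end.
Arguments Gf {V} e n.

Fixpoint toF (V : finType) n : LV V n -> LVf V n :=
  match n return LV V n -> LVf V n with
  | 0 => fun x => x
  | n'.+1 => fun x => (@toF V n' x.1, x.2)
  end.
Arguments toF {V} n.

Lemma toF_inj (V : finType) n : injective (@toF V n).
Proof.
elim: n => [|n IH] x y //=.
case: x y => [x1 x2] [y1 y2] /= [/IH -> ->] //.
Qed.

Lemma cfree_S (T : finType) (H : rel T) L : cfree H L -> cnt H L.+1 = 0 -> cfree H L.+1.
Proof.
move=> CF C0 m f m0 mL Cw.
have [HL|HL] := leqP m L; first exact: (CF m f).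
have Em : m = L.+1 by lia.
by rewrite Em in Cw; have := cnt_pos Cw; rewrite C0.
Qed.

Lemma eventual (Tn : nat -> finType) (Hs : forall n, rel (Tn n)) :
  (forall n L, cfree (Hs n) L -> cfree (Hs n.+1) L) ->
  (forall n L, 0 < L -> cfree (Hs n) L.-1 -> 0 < cnt (Hs n) L -> cnt (Hs n.+1) L < cnt (Hs n) L) ->
  forall L, exists M, forall n, M <= n -> cfree (Hs n) L.
Proof.
move=> P1 P2.
have pres L M : cfree (Hs M) L -> forall n, M <= n -> cfree (Hs n) L.
  move=> C n /subnK <-; elim: (n - M) => [|k IH] //; rewrite addSn; exact: P1.
elim => [|L [M HM]].
  by exists 0 => n _ m f m0 mL; lia.
set c0 := cnt (Hs M) L.+1.
have K : forall k, cnt (Hs (k + M)) L.+1 + k <= c0 \/ cfree (Hs (k + M)) L.+1.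
  elim => [|k [IH|IH]]; first by left; rewrite addn0.
  - case: (posnP (cnt (Hs (k + M)) L.+1)) => C0.
      right; rewrite addSn; apply: P1; apply: cfree_S => //; apply: HM; lia.
    left; have := P2 (k + M) L.+1 (ltn0Sn _) (HM _ (leq_addl _ _)) C0.
    rewrite addSn; lia.
  - right; rewrite addSn; exact: P1.
exists (c0.+1 + M); apply: pres.
by case: (K c0.+1) => // Hc; exfalso; lia.
Qed.

Definition cover (V : finType) (e : rel V) (X : Type) (H : X -> X -> bool)
  (p : X -> V) (lst : X -> V -> X) : Prop :=
  (forall x y, H x y -> e (p x) (p y)) /\
  (forall x u, e (p x) u -> H x (lst x u) /\ p (lst x u) = u) /\
  (forall x y z, H x y -> H x z -> p y = p z -> y = z) /\
  (forall x y, H x y = H y x).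

Lemma lift_cover (V : finType) (e : rel V) (X : Type) (H : X -> X -> bool)
  (p : X -> V) (lst : X -> V -> X) (s : X -> X -> bool) :
  cover e H p lst -> (forall u v, s u v = s v u) ->
  cover e (lift H s) (fun x => p x.1)
    (fun x u => (lst x.1 u, x.2 (+) s x.1 (lst x.1 u))).
Proof.
move=> [C1 [C2 [C3 C4]]] Ss; split; last split; last split.
- by move=> x y /andP [A _]; apply: C1.
- move=> x u E; have [A B] := C2 _ _ E; split => //.
  by rewrite /lift /= A /=; case: (x.2); case: (s _ _).
- move=> x y z /andP [A1 B1] /andP [A2 B2] Ep.
  have E1 := C3 _ _ _ A1 A2 Ep.
  move: (xor_eq B1) (xor_eq B2); rewrite E1 => Ey Ez.
  by move: E1 Ey Ez; clear; case: y z => [? ?] [? ?] /= -> -> ->.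
- by move=> x y; rewrite /lift C4 (Ss x.1) [x.2 == _]eq_sym.
Qed.

Theorem proposition4p12 (V : finType) (e : rel V) :
  simple_graph e ->
  exists G : forall n, LV V n -> LV V n -> bool,
    G 0 = e /\
    (forall n, is_2lift (G n) (G n.+1)) /\
    (forall (v : V) (vs : forall n, LV V n),
       (forall n, proj (vs n) = v) ->
       local_conv G vs (tree_adj e v) [::]).
Proof.
move=> [Esym Eirr].
pose G := fun n (x y : LV V n) => Gf e n (toF n x) (toF n y).
have cover_G : forall n, exists lst, cover e (G n) (@proj V n) lst.
  elim => [|n [lst Hc]].
    exists (fun _ u => u); split; last split; last split.
    - by move=> x y H0.
    - by move=> x u E0; split.
    - by move=> x y z /= A B ->.
    - by move=> x y; apply: Esym.
  exists (fun x u => (lst x.1 u, x.2 (+) choose_sign (Gf e n) (toF n x.1) (toF n (lst x.1 u)))).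
  apply: (lift_cover (s := fun u v => choose_sign (Gf e n) (toF n u) (toF n v))) Hc _.
  by move=> u v; apply: (choose_good (Gf e n)).1.
exists G; split; first by [].
split.
  move=> n; exists (fun u v => choose_sign (Gf e n) (toF n u) (toF n v)); split => //.
  by move=> u v; apply: (choose_good (Gf e n)).1.
move=> v vs Hv h.
have P1 : forall n L, cfree (Gf e n) L -> cfree (Gf e n.+1) L.
  move=> n L; apply: lift_cfree; exact: (choose_good (Gf e n)).1.
have P2 : forall n L, 0 < L -> cfree (Gf e n) L.-1 -> 0 < cnt (Gf e n) L ->
    cnt (Gf e n.+1) L < cnt (Gf e n) L.
  move=> n L; exact: (choose_good (Gf e n)).2.
have [M HM] := eventual P1 P2 (h + h).+2.
exists M => n Hn.
have [lst [C1 [C2 [C3 C4]]]] := cover_G n.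
rewrite -(Hv n); apply: ball_thm C1 C2 C3 C4 _ _ _.
move=> m f m0 mL [F0 [F1 F2]]; apply: (HM n Hn m (fun i => toF n (f i))) => //.
split; last split.
- by rewrite F0.
- exact: F1.
- by move=> i Hi /toF_inj; apply: F2.
Qed.
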